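(* Let $\mathcal N$ be an indecomposable Clifford Nil-algebra of rank $4$ with nilpotency index $NI(\mathcal N)=1$. Then $\mathcal N$ is equivalent either to one of the following quasiNil-algebras, or to the dual of one of them: (i) $\mathcal N_{12}=V_1$, $\mathcal N_{13}=V_2$, $\mathcal N_{14}=V_3$, all other $\mathcal N_{ij}=0$; (ii) $\mathcal N_{13}=V_1$, $\mathcal N_{14}=V_2$, $\mathcal N_{24}=V_3$, all other $\mathcal N_{ij}=0$; (iii) $\mathcal N_{13}=V_1$, $\mathcal N_{14}=V_2$, $\mathcal N_{23}=V_3$, $\mathcal N_{24}=V_4$, all other $\mathcal N_{ij}=0$. Here $V_1,\dots,V_4$ are arbitrary nonzero Euclidean spaces and all products $\mu_{ijk}$ are zero. Conversely, each of (i)–(iii) is an indecomposable Clifford Nil-algebra of rank 4 with $NI=1$.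
   Context: All vector spaces are finite-dimensional real. A bilinear map $\mu:X\times Y\to Z$ of Euclidean spaces is isometric if $|\mu(x,y)|=|x|\,|y|$. For a Euclidean space $V$, $\mathrm{Cl}(V)$ is the Clifford algebra with $v\cdot v=-|v|^2$. A ''$\mathrm{Cl}(V)$-module $S^0\oplus S^1$'' always means a $\mathbb Z/2$-graded $\mathrm{Cl}(V)$-module ($V\cdot S^0\subset S^1$, $V\cdot S^1\subset S^0$) with an admissible Euclidean metric: $S^0\perp S^1$ and every $v\in V$ acts skew-symmetrically (so $|v\cdot s|=|v||s|$); the maps $V\times S^0\to S^1,(v,s)\mapsto v\cdot s$ and $S^0\times V\to S^1,(s,v)\mapsto v\cdot s$ are called Clifford multiplications. A quasiNil-algebra of rank $n$ is a Euclidean space $\mathcal N$ with an orthogonal decomposition $\mathcal N=\bigoplus_{1\le i<j\le n}\mathcal N_{ij}$ and bilinear isometric maps $\mu_{ijk}:\mathcal N_{ij}\times\mathcal N_{jk}\to\mathcal N_{ik}$ ($i<j<k$; $\mu_{ijk}=0$ iff one factor is $0$); elements are strictly upper triangular matrices $A=(a_{ij})$, $a_{ij}\in\mathcal N_{ij}$, with product $(AB)_{ik}=\sum_{i<j<k}\mu_{ijk}(a_{ij},b_{jk})$. It is Clifford if every nonzero $\mu_{ijk}$ is a Clifford multiplication (either $\mathcal N_{jk}\oplus\mathcal N_{ik}$ is a $\mathrm{Cl}(\mathcal N_{ij})$-module with $\mu_{ijk}(x,y)=x\cdot y$, or $\mathcal N_{ij}\oplus\mathcal N_{ik}$ is a $\mathrm{Cl}(\mathcal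 N_{jk})$-module with $\mu_{ijk}(x,y)=y\cdot x$). A Nil-algebra is an associative quasiNil-algebra satisfying the Vinberg condition: for all $l<i<j<k$, $a\in\mathcal N_{ik}$, $b\in\mathcal N_{jk}$, if $\langle a,\mu_{ijk}(x,b)\rangle=0$ for all $x\in\mathcal N_{ij}$ then $\langle\mu_{lik}(y,a),\mu_{ljk}(z,b)\rangle=0$ for all $y\in\mathcal N_{li},z\in\mathcal N_{lj}$. The nilpotency index $NI(\mathcal N)$ is the largest $m$ such that there are $i_0<i_1<\dots<i_m$ with $\mathcal N_{i_{r-1}i_r}\neq0$ for all $r$. An isomorphism is a linear isometry preserving each $\mathcal N_{ij}$ and all products. A renumbering by a permutation $\sigma$ with $\sigma(i)<\sigma(j)$ whenever $\mathcal N_{ij}\ne0$ sets $\mathcal N'_{\sigma(i)\sigma(j)}=\mathcal N_{ij}$ with the transported products; two quasiNil-algebras are equivalent if they are isomorphic after a renumbering. The dual $\mathcal N^\tau$ has $\mathcal N^\tau_{ij}=\mathcal N_{n+1-j,\,n+1-i}$ and $\mu^\tau_{ijk}(x,y)=\mu_{n+1-k,\,n+1-j,\,n+1-i}(y,x)$. A direct sum of quasiNil-algebras of ranks $n',n''$ is the rank $n'+n''$ block-diagonal quasiNil-algebra; $\mathcal N$ is indecomposable if it is not equivalent to a direct sum of two quasiNil-algebras of positive rank. *)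

(* Defs.v *)
(* Euclidean spaces are modelled as 'rV[R]_d with the standard
   inner product, R : realType (the real numbers). *)
From HB Require Import structures.
From mathcomp Require Import all_boot all_order all_algebra.
From mathcomp Require Import reals.
Set Implicit Arguments. Unset Strict Implicit. Unset Printing Implicit Defensive.
Import Order.TTheory GRing.Theory Num.Theory.

Section QNil.
Variable R : realType.
Local Open Scope ring_scope.

Definition dotv (d : nat) (x y : 'rV[R]_d) : R := (x *m y^T) 0 0.
Definition normv (d : nat) (x : 'rV[R]_d) : R := Num.sqrt (dotv x x).

Definition bilinear_map (a b c : nat)
  (m : 'rV[R]_a -> 'rV[R]_b -> 'rV[R]_c) : Prop :=
  (forall (t : R) x x' y, m (t *: x + x') y = t *: m x y + m x' y) /\
  (forall (t : R) x y y', m x (t *: y + y') = t *: m x y + m x y').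

Definition isometric_map (a b c : nat)
  (m : 'rV[R]_a -> 'rV[R]_b -> 'rV[R]_c) : Prop :=
  forall x y, normv (m x y) = normv x * normv y.

Definition zero_map (a b c : nat) (m : 'rV[R]_a -> 'rV[R]_b -> 'rV[R]_c) : Prop :=
  forall x y, m x y = 0.

(* m : V x S0 -> S1 is a Clifford multiplication: S0 (+) S1 (orthogonal sum of
   the given Euclidean spaces) is a Z/2-graded Cl(V)-module with admissible
   metric whose odd part V x S0 -> S1 is m.  The action of v on S0 (+) S1 is
   (s, t) |-> (nu v t, m v s); the module condition is v.v = -|v|^2, and
   admissibility is skew-symmetry of each v. *)
Definition clifford_mult (a b c : nat)
  (m : 'rV[R]_a -> 'rV[R]_b -> 'rV[R]_c) : Prop :=
  bilinear_map m /\
  exists nu : 'rV[R]_a -> 'rV[R]_c -> 'rV[R]_b,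
    bilinear_map nu /\
    (forall v s, nu v (m v s) = - (dotv v v) *: s) /\
    (forall v t, m v (nu v t) = - (dotv v v) *: t) /\
    (forall v s t, dotv (m v s) t = - dotv s (nu v t)).

(* Data of a (candidate) quasiNil-algebra of rank n: the spaces N_ij = R^(qdim i j)
   (indices 0..n-1) and the products mu_ijk. *)
Record qn_data (n : nat) := QN {
  qdim : 'I_n -> 'I_n -> nat;
  qmu : forall i j k : 'I_n,
          'rV[R]_(qdim i j) -> 'rV[R]_(qdim j k) -> 'rV[R]_(qdim i k) }.
Arguments qdim {n} q i j : rename.
Arguments qmu {n} q i j k : rename.

Definition is_quasiNil n (N : qn_data n) : Prop :=
  (forall i j : 'I_n, ~~ (i < j)%N -> qdim N i j = 0%N) /\
  (forall i j k : 'I_n, (i < j)%N -> (j < k)%N ->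
     [/\ bilinear_map (qmu N i j k), isometric_map (qmu N i j k) &
         (zero_map (qmu N i j k) <-> (qdim N i j = 0%N \/ qdim N j k = 0%N))]).

Definition is_clifford n (N : qn_data n) : Prop :=
  forall i j k : 'I_n, (i < j)%N -> (j < k)%N -> ~ zero_map (qmu N i j k) ->
    clifford_mult (qmu N i j k) \/ clifford_mult (fun y x => qmu N i j k x y).

(* elements: strictly upper triangular matrices A = (a_ij), a_ij in N_ij *)
Definition qn_elt n (N : qn_data n) := forall i j : 'I_n, 'rV[R]_(qdim N i j).

Definition qn_mul n (N : qn_data n) (A B : qn_elt N) : qn_elt N :=
  fun i k => \sum_(j < n | (i < j < k)%N) qmu N i j k (A i j) (B j k).

Definition is_associative n (N : qn_data n) : Prop :=
  forall (A B C : qn_elt N) (i k : 'I_n),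
    qn_mul (qn_mul A B) C i k = qn_mul A (qn_mul B C) i k.

Definition vinberg n (N : qn_data n) : Prop :=
  forall l i j k : 'I_n, (l < i)%N -> (i < j)%N -> (j < k)%N ->
  forall (a : 'rV[R]_(qdim N i k)) (b : 'rV[R]_(qdim N j k)),
    (forall x : 'rV[R]_(qdim N i j), dotv a (qmu N i j k x b) = 0) ->
    forall (y : 'rV[R]_(qdim N l i)) (z : 'rV[R]_(qdim N l j)),
      dotv (qmu N l i k y a) (qmu N l j k z b) = 0.

Definition is_Nil n (N : qn_data n) : Prop :=
  is_quasiNil N /\ is_associative N /\ vinberg N.

Definition is_clifford_Nil n (N : qn_data n) : Prop :=
  is_Nil N /\ is_clifford N.

Definition has_chain n (N : qn_data n) (m : nat) : Prop :=
  exists s : nat -> 'I_n,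
    forall r, (r < m)%N -> (s r < s r.+1)%N /\ (0 < qdim N (s r) (s r.+1))%N.

Definition NI_is n (N : qn_data n) (m : nat) : Prop :=
  has_chain N m /\ forall m', has_chain N m' -> (m' <= m)%N.

Definition linear_fun (a b : nat) (f : 'rV[R]_a -> 'rV[R]_b) : Prop :=
  forall (t : R) x y, f (t *: x + y) = t *: f x + f y.

Definition qn_equiv n m (N : qn_data n) (N' : qn_data m) : Prop :=
  exists sigma : 'I_n -> 'I_m,
    [/\ bijective sigma,
        (forall i j : 'I_n, (0 < qdim N i j)%N -> (sigma i < sigma j)%N) &
        exists phi : forall i j : 'I_n,
            'rV[R]_(qdim N i j) -> 'rV[R]_(qdim N' (sigma i) (sigma j)),
          [/\ (forall i j : 'I_n, linear_fun (phi i j)),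
              (forall i j : 'I_n, bijective (phi i j)),
              (forall (i j : 'I_n) x, normv (phi i j x) = normv x) &
              (forall i j k : 'I_n, (i < j)%N -> (j < k)%N ->
                 (sigma i < sigma j)%N -> (sigma j < sigma k)%N ->
                 forall x y, phi i k (qmu N i j k x y) =
                   qmu N' (sigma i) (sigma j) (sigma k) (phi i j x) (phi j k y))]].

Definition qn_dual n (N : qn_data n) : qn_data n :=
  @QN n (fun i j => qdim N (rev_ord j) (rev_ord i))
        (fun i j k x y => qmu N (rev_ord k) (rev_ord j) (rev_ord i) y x).

Section DSum.
Variables (n1 n2 : nat) (N1 : qn_data n1) (N2 : qn_data n2).

Definition dsum_dim (a b : 'I_n1 + 'I_n2) : nat :=
  match a, b with
  | inl x, inl y => qdim N1 x y
  | inr x, inr y => qdim N2 x y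
  | _, _ => 0%N
  end.

Definition dsum_mu (a b c : 'I_n1 + 'I_n2) :
  'rV[R]_(dsum_dim a b) -> 'rV[R]_(dsum_dim b c) -> 'rV[R]_(dsum_dim a c) :=
  match a as a', b as b', c as c'
    return 'rV[R]_(dsum_dim a' b') -> 'rV[R]_(dsum_dim b' c') ->
           'rV[R]_(dsum_dim a' c') with
  | inl x, inl y, inl z => qmu N1 x y z
  | inr x, inr y, inr z => qmu N2 x y z
  | _, _, _ => fun _ _ => 0
  end.

Definition qn_dsum : qn_data (n1 + n2) :=
  @QN (n1 + n2) (fun i j => dsum_dim (split i) (split j))
      (fun i j k => @dsum_mu (split i) (split j) (split k)).
End DSum.

Definition indecomposable n (N : qn_data n) : Prop :=
  ~ exists n1 n2 (N1 : qn_data n1) (N2 : qn_data n2),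
      [/\ (0 < n1)%N, (0 < n2)%N, is_quasiNil N1, is_quasiNil N2 &
          qn_equiv N (qn_dsum N1 N2)].

(* the three model algebras of rank 4 (0-based indices: N_12 is (0,1), etc.),
   all products zero *)
Definition zero_mu (d : 'I_4 -> 'I_4 -> nat) :=
  fun (i j k : 'I_4) (_ : 'rV[R]_(d i j)) (_ : 'rV[R]_(d j k)) => (0 : 'rV[R]_(d i k)).

Definition dim_i (d1 d2 d3 : nat) (i j : 'I_4) : nat :=
  match nat_of_ord i, nat_of_ord j with
  | 0, 1 => d1 | 0, 2 => d2 | 0, 3 => d3 | _, _ => 0 end%N.
Definition dim_ii (d1 d2 d3 : nat) (i j : 'I_4) : nat :=
  match nat_of_ord i, nat_of_ord j with
  | 0, 2 => d1 | 0, 3 => d2 | 1, 3 => d3 | _, _ => 0 end%N.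
Definition dim_iii (d1 d2 d3 d4 : nat) (i j : 'I_4) : nat :=
  match nat_of_ord i, nat_of_ord j with
  | 0, 2 => d1 | 0, 3 => d2 | 1, 2 => d3 | 1, 3 => d4 | _, _ => 0 end%N.

Definition model_i d1 d2 d3 : qn_data 4 :=
  @QN 4 (dim_i d1 d2 d3) (@zero_mu (dim_i d1 d2 d3)).
Definition model_ii d1 d2 d3 : qn_data 4 :=
  @QN 4 (dim_ii d1 d2 d3) (@zero_mu (dim_ii d1 d2 d3)).
Definition model_iii d1 d2 d3 d4 : qn_data 4 :=
  @QN 4 (dim_iii d1 d2 d3 d4) (@zero_mu (dim_iii d1 d2 d3 d4)).

End QNil.

(* Main.v *)
Require Import Defs.
From HB Require Import structures.
From mathcomp Require Import all_boot all_order all_algebra.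
From mathcomp Require Import reals.
Set Implicit Arguments. Unset Strict Implicit. Unset Printing Implicit Defensive.
Import Order.TTheory GRing.Theory Num.Theory.
Local Open Scope ring_scope.

Section Gen.
Variable R : realType.

Lemma dotv0l d (y : 'rV[R]_d) : dotv 0 y = 0.
Proof. by rewrite /dotv mul0mx mxE. Qed.

Lemma normv0 d : normv (0 : 'rV[R]_d) = 0.
Proof. by rewrite /normv /dotv mul0mx mxE sqrtr0. Qed.

Lemma normv_dim0 d (x : 'rV[R]_d) : d = 0%N -> normv x = 0.
Proof. move=> Hd; move: x; rewrite Hd => x; by rewrite (thinmx0 x) normv0. Qed.

Lemma zlt (m : nat) : m = 0%N -> (0 < m)%N -> False.
Proof. by move=> ->. Qed.

Lemma zero_quasiNil n (M : qn_data R n) :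
 (forall i j : 'I_n, ~~ (i < j)%N -> qdim M i j = 0%N) ->
 (forall i j k : 'I_n, (i < j)%N -> (j < k)%N -> (0 < qdim M i j)%N -> (0 < qdim M j k)%N -> False) ->
 (forall (i j k : 'I_n) x y, (i < j)%N -> (j < k)%N -> @qmu _ _ M i j k x y = 0) ->
 is_quasiNil M.
Proof.
move=> H0 H2 H3; split=> // i j k ij jk.
have Hz : zero_map (@qmu _ _ M i j k) by move=> x y; exact: H3.
have Hd : qdim M i j = 0%N \/ qdim M j k = 0%N.
  case: (posnP (qdim M i j)) => A; first by left.
  case: (posnP (qdim M j k)) => B; first by right.
  by case: (H2 _ _ _ ij jk A B).
split.
- by split=> *; rewrite !Hz scaler0 addr0.
- move=> x y; rewrite Hz normv0.
  by case: Hd => D; [rewrite (normv_dim0 x D) mul0r | rewrite (normv_dim0 y D) mulr0].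
- by split.
Qed.

Lemma zero_cliffordNil n (M : qn_data R n) :
 (forall i j : 'I_n, ~~ (i < j)%N -> qdim M i j = 0%N) ->
 (forall i j k : 'I_n, (i < j)%N -> (j < k)%N -> (0 < qdim M i j)%N -> (0 < qdim M j k)%N -> False) ->
 (forall (i j k : 'I_n) x y, (i < j)%N -> (j < k)%N -> @qmu _ _ M i j k x y = 0) ->
 is_clifford_Nil M.
Proof.
move=> H0 H2 H3.
have HM : forall (A B : qn_elt M) i k, qn_mul A B i k = 0.
  move=> A B i k; rewrite /qn_mul big1 // => j /andP[ij jk]; exact: H3.
split; [split; [exact: zero_quasiNil | split] | ].
- by move=> A B C i k; rewrite !HM.
- move=> l i j k li ij jk a b _ y z; rewrite (H3 l i k) ?dotv0l //; exact: ltn_trans jk.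
- by move=> i j k ij jk Hn; exfalso; apply: Hn => x y; exact: H3.
Qed.

Definition rcast a b (e : a = b) (x : 'rV[R]_a) : 'rV[R]_b := castmx (erefl 1%N, e) x.

Lemma rcast_lin a b (e : a = b) : linear_fun (rcast e).
Proof. by case: b / e => t x y; rewrite /rcast !castmx_id. Qed.
Lemma rcast_bij a b (e : a = b) : bijective (rcast e).
Proof. case: b / e; exists id => x; by rewrite /rcast castmx_id. Qed.
Lemma rcast_norm a b (e : a = b) x : normv (rcast e x) = normv x.
Proof. by case: b / e; rewrite /rcast castmx_id. Qed.
Lemma rcast0 a b (e : a = b) : rcast e 0 = 0.
Proof. by case: b / e; rewrite /rcast castmx_id. Qed.

Lemma equiv_zero n m (N : qn_data R n) (N' : qn_data R m) (sigma : 'I_n -> 'I_m) :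
  bijective sigma ->
  (forall i j, qdim N i j = qdim N' (sigma i) (sigma j)) ->
  (forall i j, (0 < qdim N i j)%N -> (sigma i < sigma j)%N) ->
  (forall (i j k : 'I_n) x y, (i < j)%N -> (j < k)%N -> @qmu _ _ N i j k x y = 0) ->
  (forall (i j k : 'I_m) x y, @qmu _ _ N' i j k x y = 0) ->
  qn_equiv N N'.
Proof.
move=> Hb Hd Ho HN HN'; exists sigma; split=> //.
exists (fun i j => rcast (Hd i j)); split.
- move=> i j; exact: rcast_lin.
- move=> i j; exact: rcast_bij.
- move=> i j x; exact: rcast_norm.
- by move=> i j k ij jk _ _ x y; rewrite HN // HN' rcast0.
Qed.


Definition restr n k (N : qn_data R n) (a : 'I_k -> 'I_n) : qn_data R k :=
  @QN R k (fun r s => qdim N (a r) (a s)) (fun r s t _ _ => 0).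

Lemma restr_qN n k (N : qn_data R n) (a : 'I_k -> 'I_n) :
  (forall i j : 'I_n, ~~ (i < j)%N -> qdim N i j = 0%N) ->
  (forall i j k : 'I_n, (i < j)%N -> (j < k)%N -> (0 < qdim N i j)%N -> (0 < qdim N j k)%N -> False) ->
  (forall r r', (0 < qdim N (a r) (a r'))%N -> (r < r')%N) ->
  is_quasiNil (restr N a).
Proof.
move=> H0 H2 Hm; apply: zero_quasiNil => //=.
- move=> r r' Hn; case: (posnP (qdim N (a r) (a r'))) => // P.
  by move: (Hm _ _ P); rewrite (negbTE Hn).
- move=> r s t _ _ P1 P2; apply: (H2 (a r) (a s) (a t)) => //.
  + by apply: contraLR P1 => /H0 ->.
  + by apply: contraLR P2 => /H0 ->.
Qed.

Lemma decomp (N : qn_data R 4) n1 n2 (a : 'I_n1 -> 'I_4) (b : 'I_n2 -> 'I_4)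
  (f : 'I_4 -> 'I_n1 + 'I_n2) :
  (forall i j : 'I_4, ~~ (i < j)%N -> qdim N i j = 0%N) ->
  (forall i j k : 'I_4, (i < j)%N -> (j < k)%N -> (0 < qdim N i j)%N -> (0 < qdim N j k)%N -> False) ->
  (forall (i j k : 'I_4) x y, (i < j)%N -> (j < k)%N -> @qmu _ _ N i j k x y = 0) ->
  (0 < n1)%N -> (0 < n2)%N ->
  (forall r, f (a r) = inl r) -> (forall s, f (b s) = inr s) ->
  (forall i, match f i with inl r => a r = i | inr s => b s = i end) ->
  (forall r r', (0 < qdim N (a r) (a r'))%N -> (r < r')%N) ->
  (forall s s', (0 < qdim N (b s) (b s'))%N -> (s < s')%N) ->
  (forall r s, qdim N (a r) (b s) = 0%N) -> (forall r s, qdim N (b s) (a r) = 0%N) ->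
  exists n1 n2 (N1 : qn_data R n1) (N2 : qn_data R n2),
      [/\ (0 < n1)%N, (0 < n2)%N, is_quasiNil N1, is_quasiNil N2 &
          qn_equiv N (qn_dsum N1 N2)].
Proof.
move=> H0 H2 H3 p1 p2 Ha Hb Hf Ma Mb Cab Cba.
exists n1, n2, (restr N a), (restr N b); split=> //; try exact: restr_qN.
apply: (@equiv_zero _ _ _ _ (fun i => unsplit (f i))) => //.
- exists (fun k => match split k with inl r => a r | inr s => b s end).
  + move=> i; rewrite unsplitK; move: (Hf i); by case: (f i).
  + move=> k; case E: (split k) => [r|s]; by rewrite ?Ha ?Hb -E splitK.
- move=> i j /=; rewrite !unsplitK; move: (Hf i) (Hf j).
  by case: (f i) => [r|s]; case: (f j) => [r'|s'] <- <- /=.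
- move=> i j /=; move: (Hf i) (Hf j).
  case: (f i) => [r|s]; case: (f j) => [r'|s'] <- <- /=.
  + exact: Ma.
  + by rewrite Cab.
  + by rewrite Cba.
  + by move/Mb; rewrite ltn_add2l.
- move=> i j k /=.
  by case: (split i) => ?; case: (split j) => ?; case: (split k) => ? x y.
Qed.

Lemma bij_pos d e (f : 'rV[R]_d -> 'rV[R]_e) : bijective f -> (0 < d)%N -> (0 < e)%N.
Proof.
case: e f => [|e] // f [g fK gK] Hd.
have : (0 : 'rV[R]_d) = const_mx 1.
  by rewrite -[LHS]fK -[RHS]fK (thinmx0 (f 0)) (thinmx0 (f (const_mx 1))).
move/matrixP => /(_ 0 (Ordinal Hd)); rewrite !mxE => /eqP.
by rewrite eq_sym oner_eq0.
Qed.

Lemma indec_gen (M : qn_data R 4) :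
  (forall P : 'I_4 -> bool, (forall i j, (0 < qdim M i j)%N -> P i = P j) ->
      forall i j, P i = P j) ->
  indecomposable M.
Proof.
move=> Hc [n1 [n2 [N1 [N2 [p1 p2 _ _ [sigma [[g sK gK] _ [phi [_ Hphi _ _]]]]]]]]].
pose blk (k : 'I_(n1 + n2)) := if split k is inl _ then true else false.
have E : forall i j, (0 < qdim M i j)%N -> blk (sigma i) = blk (sigma j).
  move=> i j Hp; have := bij_pos (Hphi i j) Hp; rewrite /= /blk.
  by case: (split (sigma i)) => ?; case: (split (sigma j)) => ?.
have := Hc _ E (g (unsplit (inl (Ordinal p1)))) (g (unsplit (inr (Ordinal p2)))).
by rewrite !gK /blk !unsplitK.
Qed.


Definition o0 : 'I_4 := @Ordinal 4 0 isT.
Definition o1 : 'I_4 := @Ordinal 4 1 isT.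
Definition o2 : 'I_4 := @Ordinal 4 2 isT.
Definition o3 : 'I_4 := @Ordinal 4 3 isT.

Lemma ord4_cases (P : 'I_4 -> Prop) : P o0 -> P o1 -> P o2 -> P o3 -> forall i, P i.
Proof.
move=> H0 H1 H2 H3 [[|[|[|[|m]]]] Hm] //.
- by rewrite (bool_irrelevance Hm isT).
- by rewrite (bool_irrelevance Hm isT).
- by rewrite (bool_irrelevance Hm isT).
- by rewrite (bool_irrelevance Hm isT).
Qed.

Ltac o4 := let i := fresh "i" in intro i; pattern i; revert i; apply ord4_cases.

Definition o_of (k : nat) : 'I_4 := match k with 0 => o0 | 1 => o1 | 2 => o2 | _ => o3 end.
Definition p4 (l : seq nat) : 'I_4 -> 'I_4 := fun i => o_of (nth 0%N l i).

Lemma conv_i d1 d2 d3 : (0 < d1)%N -> (0 < d2)%N -> (0 < d3)%N ->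
  is_clifford_Nil (model_i R d1 d2 d3) /\
  indecomposable (model_i R d1 d2 d3) /\ NI_is (model_i R d1 d2 d3) 1.
Proof.
move=> h1 h2 h3.
have C2 : forall i j k : 'I_4, (i < j)%N -> (j < k)%N ->
   (0 < qdim (model_i R d1 d2 d3) i j)%N -> (0 < qdim (model_i R d1 d2 d3) j k)%N -> False.
  o4; o4; o4; by [].
split; [|split].
- apply: zero_cliffordNil => //.
  o4; o4; by [].
- apply: indec_gen => P H.
  have e1 := H o0 o1 h1; have e2 := H o0 o2 h2; have e3 := H o0 o3 h3.
  o4; o4; congruence.
- split.
  + exists (fun r => if r is 0%N then o0 else o1) => -[|r] // _; by split.
  + move=> [|[|m]] // [s Hs]; exfalso.
    have [A B] := Hs 0%N isT; have [C D] := Hs 1%N isT; exact: (C2 _ _ _ A C B D).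
Qed.


Lemma conv_ii d1 d2 d3 : (0 < d1)%N -> (0 < d2)%N -> (0 < d3)%N ->
  is_clifford_Nil (model_ii R d1 d2 d3) /\
  indecomposable (model_ii R d1 d2 d3) /\ NI_is (model_ii R d1 d2 d3) 1.
Proof.
move=> h1 h2 h3.
have C2 : forall i j k : 'I_4, (i < j)%N -> (j < k)%N ->
   (0 < qdim (model_ii R d1 d2 d3) i j)%N -> (0 < qdim (model_ii R d1 d2 d3) j k)%N -> False.
  o4; o4; o4; by [].
split; [|split].
- apply: zero_cliffordNil => //.
  o4; o4; by [].
- apply: indec_gen => P H.
  have e1 := H o0 o2 h1; have e2 := H o0 o3 h2; have e3 := H o1 o3 h3.
  o4; o4; congruence.
- split.
  + exists (fun r => if r is 0%N then o0 else o2) => -[|r] // _; by split.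
  + move=> [|[|m]] // [s Hs]; exfalso.
    have [A B] := Hs 0%N isT; have [C D] := Hs 1%N isT; exact: (C2 _ _ _ A C B D).
Qed.

Lemma conv_iii d1 d2 d3 d4 : (0 < d1)%N -> (0 < d2)%N -> (0 < d3)%N -> (0 < d4)%N ->
  is_clifford_Nil (model_iii R d1 d2 d3 d4) /\
  indecomposable (model_iii R d1 d2 d3 d4) /\ NI_is (model_iii R d1 d2 d3 d4) 1.
Proof.
move=> h1 h2 h3 h4.
have C2 : forall i j k : 'I_4, (i < j)%N -> (j < k)%N ->
   (0 < qdim (model_iii R d1 d2 d3 d4) i j)%N -> (0 < qdim (model_iii R d1 d2 d3 d4) j k)%N -> False.
  o4; o4; o4; by [].
split; [|split].
- apply: zero_cliffordNil => //.
  o4; o4; by [].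
- apply: indec_gen => P H.
  have e1 := H o0 o2 h1; have e2 := H o0 o3 h2; have e3 := H o1 o3 h4.
  o4; o4; congruence.
- split.
  + exists (fun r => if r is 0%N then o0 else o2) => -[|r] // _; by split.
  + move=> [|[|m]] // [s Hs]; exfalso.
    have [A B] := Hs 0%N isT; have [C D] := Hs 1%N isT; exact: (C2 _ _ _ A C B D).
Qed.

Lemma ni_lemma n (N : qn_data R n) : NI_is N 1 ->
  forall i j k : 'I_n, (i < j)%N -> (j < k)%N -> (0 < qdim N i j)%N -> (0 < qdim N j k)%N -> False.
Proof.
move=> [_ Hm] i j k ij jk A B.
have : (2 <= 1)%N; last by [].
apply: Hm; exists (fun r => if r is 0%N then i else if r is 1%N then j else k).
by move=> [|[|r]] //= _; split.
Qed.

Lemma ne_lemma n (N : qn_data R n) : NI_is N 1 -> (forall i j, qdim N i j = 0%N) -> False.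
Proof. by move=> [[s Hs] _] Z; have [_] := Hs 0%N isT; rewrite Z. Qed.

Definition mkA (l : seq nat) n : 'I_n -> 'I_4 := fun r => o_of (nth 0%N l r).
Arguments mkA l {n}.

Definition fd0 : 'I_4 -> 'I_1 + 'I_3 := fun i => match nat_of_ord i with 0 => inl (@Ordinal 1 0 isT) | 1 => inr (@Ordinal 3 0 isT) | 2 => inr (@Ordinal 3 1 isT) | _ => inr (@Ordinal 3 2 isT) end.
Definition fd1 : 'I_4 -> 'I_1 + 'I_3 := fun i => match nat_of_ord i with 0 => inl (@Ordinal 1 0 isT) | 1 => inr (@Ordinal 3 0 isT) | 2 => inr (@Ordinal 3 1 isT) | _ => inr (@Ordinal 3 2 isT) end.
Definition fd2 : 'I_4 -> 'I_1 + 'I_3 := fun i => match nat_of_ord i with 0 => inl (@Ordinal 1 0 isT) | 1 => inr (@Ordinal 3 0 isT) | 2 => inr (@Ordinal 3 1 isT) | _ => inr (@Ordinal 3 2 isT) end.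
Definition fd3 : 'I_4 -> 'I_1 + 'I_3 := fun i => match nat_of_ord i with 0 => inl (@Ordinal 1 0 isT) | 1 => inr (@Ordinal 3 0 isT) | 2 => inr (@Ordinal 3 1 isT) | _ => inr (@Ordinal 3 2 isT) end.
Definition fd4 : 'I_4 -> 'I_1 + 'I_3 := fun i => match nat_of_ord i with 0 => inl (@Ordinal 1 0 isT) | 1 => inr (@Ordinal 3 0 isT) | 2 => inr (@Ordinal 3 1 isT) | _ => inr (@Ordinal 3 2 isT) end.
Definition fd5 : 'I_4 -> 'I_2 + 'I_2 := fun i => match nat_of_ord i with 0 => inl (@Ordinal 2 0 isT) | 1 => inr (@Ordinal 2 0 isT) | 2 => inr (@Ordinal 2 1 isT) | _ => inl (@Ordinal 2 1 isT) end.
Definition fd6 : 'I_4 -> 'I_3 + 'I_1 := fun i => match nat_of_ord i with 0 => inl (@Ordinal 3 0 isT) | 1 => inr (@Ordinal 1 0 isT) | 2 => inl (@Ordinal 3 1 isT) | _ => inl (@Ordinal 3 2 isT) end.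
Definition fd7 : 'I_4 -> 'I_3 + 'I_1 := fun i => match nat_of_ord i with 0 => inl (@Ordinal 3 0 isT) | 1 => inl (@Ordinal 3 1 isT) | 2 => inr (@Ordinal 1 0 isT) | _ => inl (@Ordinal 3 2 isT) end.
Definition fd8 : 'I_4 -> 'I_2 + 'I_2 := fun i => match nat_of_ord i with 0 => inl (@Ordinal 2 0 isT) | 1 => inr (@Ordinal 2 0 isT) | 2 => inr (@Ordinal 2 1 isT) | _ => inl (@Ordinal 2 1 isT) end.
Definition fd9 : 'I_4 -> 'I_2 + 'I_2 := fun i => match nat_of_ord i with 0 => inl (@Ordinal 2 0 isT) | 1 => inr (@Ordinal 2 0 isT) | 2 => inl (@Ordinal 2 1 isT) | _ => inr (@Ordinal 2 1 isT) end.
Definition fd10 : 'I_4 -> 'I_2 + 'I_2 := fun i => match nat_of_ord i with 0 => inl (@Ordinal 2 0 isT) | 1 => inr (@Ordinal 2 0 isT) | 2 => inl (@Ordinal 2 1 isT) | _ => inr (@Ordinal 2 1 isT) end.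
Definition fd11 : 'I_4 -> 'I_3 + 'I_1 := fun i => match nat_of_ord i with 0 => inl (@Ordinal 3 0 isT) | 1 => inl (@Ordinal 3 1 isT) | 2 => inl (@Ordinal 3 2 isT) | _ => inr (@Ordinal 1 0 isT) end.
Definition fd12 : 'I_4 -> 'I_3 + 'I_1 := fun i => match nat_of_ord i with 0 => inl (@Ordinal 3 0 isT) | 1 => inr (@Ordinal 1 0 isT) | 2 => inl (@Ordinal 3 1 isT) | _ => inl (@Ordinal 3 2 isT) end.
Definition fd13 : 'I_4 -> 'I_2 + 'I_2 := fun i => match nat_of_ord i with 0 => inl (@Ordinal 2 0 isT) | 1 => inl (@Ordinal 2 1 isT) | 2 => inr (@Ordinal 2 0 isT) | _ => inr (@Ordinal 2 1 isT) end.
Definition fd14 : 'I_4 -> 'I_2 + 'I_2 := fun i => match nat_of_ord i with 0 => inl (@Ordinal 2 0 isT) | 1 => inl (@Ordinal 2 1 isT) | 2 => inr (@Ordinal 2 0 isT) | _ => inr (@Ordinal 2 1 isT) end.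
Definition fd15 : 'I_4 -> 'I_3 + 'I_1 := fun i => match nat_of_ord i with 0 => inl (@Ordinal 3 0 isT) | 1 => inl (@Ordinal 3 1 isT) | 2 => inr (@Ordinal 1 0 isT) | _ => inl (@Ordinal 3 2 isT) end.
Definition fd16 : 'I_4 -> 'I_3 + 'I_1 := fun i => match nat_of_ord i with 0 => inl (@Ordinal 3 0 isT) | 1 => inl (@Ordinal 3 1 isT) | 2 => inl (@Ordinal 3 2 isT) | _ => inr (@Ordinal 1 0 isT) end.

Ltac zex := match goal with Z : _ = 0%N |- _ => exact Z end.
Ltac zlt_tac H := match goal with Z : _ = 0%N |- _ => exact: (zlt Z H) end.
Ltac ocase := let m := fresh "m" in let Hm := fresh "Hm" in case=> [[|[|[|m]]] Hm] //.
Ltac ordtac := let H := fresh "H" in move=> H; first [exact isT | exfalso; zlt_tac H].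
Ltac dtac := [> ocase; apply/eqP; exact isT | ocase; apply/eqP; exact isT
  | o4; reflexivity | ocase; ocase; ordtac | ocase; ocase; ordtac
  | ocase; ocase; zex | ocase; ocase; zex ].

Lemma forward (N : qn_data R 4) :
  is_clifford_Nil N -> indecomposable N -> NI_is N 1 ->
     exists d1 d2 d3 d4 : nat,
       [/\ (0 < d1)%N, (0 < d2)%N, (0 < d3)%N & (0 < d4)%N] /\
       (qn_equiv N (model_i R d1 d2 d3) \/
        qn_equiv N (qn_dual (model_i R d1 d2 d3)) \/
        qn_equiv N (model_ii R d1 d2 d3) \/
        qn_equiv N (qn_dual (model_ii R d1 d2 d3)) \/
        qn_equiv N (model_iii R d1 d2 d3 d4) \/
        qn_equiv N (qn_dual (model_iii R d1 d2 d3 d4))).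
Proof.
move=> [[[H0 HQ] _] _] Hind HNI.
have H2 := ni_lemma HNI.
have Hne := ne_lemma HNI.
have H3 : forall (i j k : 'I_4) x y, (i < j)%N -> (j < k)%N -> @qmu _ _ N i j k x y = 0.
  move=> i j k x y ij jk; have [_ _ [_ Hz]] := HQ i j k ij jk; apply: Hz.
  case: (posnP (qdim N i j)) => A; first by left.
  case: (posnP (qdim N j k)) => B; first by right.
  by case: (H2 _ _ _ ij jk A B).
have Z00 : qdim N o0 o0 = 0%N by apply: H0.
have Z11 : qdim N o1 o1 = 0%N by apply: H0.
have Z22 : qdim N o2 o2 = 0%N by apply: H0.
have Z33 : qdim N o3 o3 = 0%N by apply: H0.
have Z10 : qdim N o1 o0 = 0%N by apply: H0.
have Z20 : qdim N o2 o0 = 0%N by apply: H0.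
have Z30 : qdim N o3 o0 = 0%N by apply: H0.
have Z21 : qdim N o2 o1 = 0%N by apply: H0.
have Z31 : qdim N o3 o1 = 0%N by apply: H0.
have Z32 : qdim N o3 o2 = 0%N by apply: H0.
Ltac mtac l linv := apply: (@equiv_zero _ _ _ _ (p4 l));
  [ exists (p4 linv); o4; reflexivity
  | o4; o4; first [reflexivity | zex]
  | o4; o4; ordtac
  | assumption
  | move=> *; reflexivity ].
case: (posnP (qdim N o0 o1)) => E01; case: (posnP (qdim N o0 o2)) => E02;
case: (posnP (qdim N o0 o3)) => E03; case: (posnP (qdim N o1 o2)) => E12;
case: (posnP (qdim N o1 o3)) => E13; case: (posnP (qdim N o2 o3)) => E23.
- exfalso; apply: Hne; o4; o4; assumption.
- exfalso; apply: Hind; apply: (@decomp N 1 3 (mkA [:: 0%N]) (mkA [:: 1%N; 2%N; 3%N]) fd0 H0 H2 H3 isT isT); dtac.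
- exfalso; apply: Hind; apply: (@decomp N 1 3 (mkA [:: 0%N]) (mkA [:: 1%N; 2%N; 3%N]) fd1 H0 H2 H3 isT isT); dtac.
- exfalso; apply: Hind; apply: (@decomp N 1 3 (mkA [:: 0%N]) (mkA [:: 1%N; 2%N; 3%N]) fd2 H0 H2 H3 isT isT); dtac.
- exfalso; apply: Hind; apply: (@decomp N 1 3 (mkA [:: 0%N]) (mkA [:: 1%N; 2%N; 3%N]) fd3 H0 H2 H3 isT isT); dtac.
- exfalso; exact: (H2 o1 o2 o3 isT isT E12 E23).
- exfalso; apply: Hind; apply: (@decomp N 1 3 (mkA [:: 0%N]) (mkA [:: 1%N; 2%N; 3%N]) fd4 H0 H2 H3 isT isT); dtac.
- exfalso; exact: (H2 o1 o2 o3 isT isT E12 E23).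
- exfalso; apply: Hind; apply: (@decomp N 2 2 (mkA [:: 0%N; 3%N]) (mkA [:: 1%N; 2%N]) fd5 H0 H2 H3 isT isT); dtac.
- exfalso; apply: Hind; apply: (@decomp N 3 1 (mkA [:: 0%N; 2%N; 3%N]) (mkA [:: 1%N]) fd6 H0 H2 H3 isT isT); dtac.
- exfalso; apply: Hind; apply: (@decomp N 3 1 (mkA [:: 0%N; 1%N; 3%N]) (mkA [:: 2%N]) fd7 H0 H2 H3 isT isT); dtac.
- exists (qdim N o2 o3), (qdim N o1 o3), (qdim N o0 o3), 1%N; split; [by split; first [assumption | exact isT] | do 1 right; left;  mtac [:: 0%N; 1%N; 2%N; 3%N] [:: 0%N; 1%N; 2%N; 3%N]].
- exfalso; apply: Hind; apply: (@decomp N 2 2 (mkA [:: 0%N; 3%N]) (mkA [:: 1%N; 2%N]) fd8 H0 H2 H3 isT isT); dtac.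
- exfalso; exact: (H2 o1 o2 o3 isT isT E12 E23).
- exists (qdim N o1 o2), (qdim N o1 o3), (qdim N o0 o3), 1%N; split; [by split; first [assumption | exact isT] | do 2 right; left;  mtac [:: 1%N; 0%N; 2%N; 3%N] [:: 1%N; 0%N; 2%N; 3%N]].
- exfalso; exact: (H2 o1 o2 o3 isT isT E12 E23).
- exfalso; apply: Hind; apply: (@decomp N 2 2 (mkA [:: 0%N; 2%N]) (mkA [:: 1%N; 3%N]) fd9 H0 H2 H3 isT isT); dtac.
- exfalso; exact: (H2 o0 o2 o3 isT isT E02 E23).
- exfalso; apply: Hind; apply: (@decomp N 2 2 (mkA [:: 0%N; 2%N]) (mkA [:: 1%N; 3%N]) fd10 H0 H2 H3 isT isT); dtac.
- exfalso; exact: (H2 o0 o2 o3 isT isT E02 E23).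
- exfalso; apply: Hind; apply: (@decomp N 3 1 (mkA [:: 0%N; 1%N; 2%N]) (mkA [:: 3%N]) fd11 H0 H2 H3 isT isT); dtac.
- exfalso; exact: (H2 o0 o2 o3 isT isT E02 E23).
- exists (qdim N o1 o3), (qdim N o1 o2), (qdim N o0 o2), 1%N; split; [by split; first [assumption | exact isT] | do 2 right; left;  mtac [:: 1%N; 0%N; 3%N; 2%N] [:: 1%N; 0%N; 3%N; 2%N]].
- exfalso; exact: (H2 o0 o2 o3 isT isT E02 E23).
- exfalso; apply: Hind; apply: (@decomp N 3 1 (mkA [:: 0%N; 2%N; 3%N]) (mkA [:: 1%N]) fd12 H0 H2 H3 isT isT); dtac.
- exfalso; exact: (H2 o0 o2 o3 isT isT E02 E23).
- exists (qdim N o0 o2), (qdim N o0 o3), (qdim N o1 o3), 1%N; split; [by split; first [assumption | exact isT] | do 2 right; left;  mtac [:: 0%N; 1%N; 2%N; 3%N] [:: 0%N; 1%N; 2%N; 3%N]].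
- exfalso; exact: (H2 o0 o2 o3 isT isT E02 E23).
- exists (qdim N o0 o3), (qdim N o0 o2), (qdim N o1 o2), 1%N; split; [by split; first [assumption | exact isT] | do 2 right; left;  mtac [:: 0%N; 1%N; 3%N; 2%N] [:: 0%N; 1%N; 3%N; 2%N]].
- exfalso; exact: (H2 o1 o2 o3 isT isT E12 E23).
- exists (qdim N o0 o2), (qdim N o0 o3), (qdim N o1 o2), (qdim N o1 o3); split; [by split; first [assumption | exact isT] | do 4 right; left;  mtac [:: 0%N; 1%N; 2%N; 3%N] [:: 0%N; 1%N; 2%N; 3%N]].
- exfalso; exact: (H2 o1 o2 o3 isT isT E12 E23).
- exfalso; apply: Hind; apply: (@decomp N 2 2 (mkA [:: 0%N; 1%N]) (mkA [:: 2%N; 3%N]) fd13 H0 H2 H3 isT isT); dtac.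
- exfalso; apply: Hind; apply: (@decomp N 2 2 (mkA [:: 0%N; 1%N]) (mkA [:: 2%N; 3%N]) fd14 H0 H2 H3 isT isT); dtac.
- exfalso; exact: (H2 o0 o1 o3 isT isT E01 E13).
- exfalso; exact: (H2 o0 o1 o3 isT isT E01 E13).
- exfalso; exact: (H2 o0 o1 o2 isT isT E01 E12).
- exfalso; exact: (H2 o0 o1 o2 isT isT E01 E12).
- exfalso; exact: (H2 o0 o1 o2 isT isT E01 E12).
- exfalso; exact: (H2 o0 o1 o2 isT isT E01 E12).
- exfalso; apply: Hind; apply: (@decomp N 3 1 (mkA [:: 0%N; 1%N; 3%N]) (mkA [:: 2%N]) fd15 H0 H2 H3 isT isT); dtac.
- exists (qdim N o0 o1), (qdim N o0 o3), (qdim N o2 o3), 1%N; split; [by split; first [assumption | exact isT] | do 2 right; left;  mtac [:: 0%N; 2%N; 1%N; 3%N] [:: 0%N; 2%N; 1%N; 3%N]].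
- exfalso; exact: (H2 o0 o1 o3 isT isT E01 E13).
- exfalso; exact: (H2 o0 o1 o3 isT isT E01 E13).
- exfalso; exact: (H2 o0 o1 o2 isT isT E01 E12).
- exfalso; exact: (H2 o0 o1 o2 isT isT E01 E12).
- exfalso; exact: (H2 o0 o1 o2 isT isT E01 E12).
- exfalso; exact: (H2 o0 o1 o2 isT isT E01 E12).
- exfalso; apply: Hind; apply: (@decomp N 3 1 (mkA [:: 0%N; 1%N; 2%N]) (mkA [:: 3%N]) fd16 H0 H2 H3 isT isT); dtac.
- exfalso; exact: (H2 o0 o2 o3 isT isT E02 E23).
- exfalso; exact: (H2 o0 o1 o3 isT isT E01 E13).
- exfalso; exact: (H2 o0 o1 o3 isT isT E01 E13).
- exfalso; exact: (H2 o0 o1 o2 isT isT E01 E12).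
- exfalso; exact: (H2 o0 o1 o2 isT isT E01 E12).
- exfalso; exact: (H2 o0 o1 o2 isT isT E01 E12).
- exfalso; exact: (H2 o0 o1 o2 isT isT E01 E12).
- exists (qdim N o0 o1), (qdim N o0 o2), (qdim N o0 o3), 1%N; split; [by split; first [assumption | exact isT] | left;  mtac [:: 0%N; 1%N; 2%N; 3%N] [:: 0%N; 1%N; 2%N; 3%N]].
- exfalso; exact: (H2 o0 o2 o3 isT isT E02 E23).
- exfalso; exact: (H2 o0 o1 o3 isT isT E01 E13).
- exfalso; exact: (H2 o0 o1 o3 isT isT E01 E13).
- exfalso; exact: (H2 o0 o1 o2 isT isT E01 E12).
- exfalso; exact: (H2 o0 o1 o2 isT isT E01 E12).
- exfalso; exact: (H2 o0 o1 o2 isT isT E01 E12).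
- exfalso; exact: (H2 o0 o1 o2 isT isT E01 E12).
Qed.

End Gen.

Theorem theorem1 (R : realType) :
  (forall N : qn_data R 4,
     is_clifford_Nil N -> indecomposable N -> NI_is N 1 ->
     exists d1 d2 d3 d4 : nat,
       [/\ (0 < d1)%N, (0 < d2)%N, (0 < d3)%N & (0 < d4)%N] /\
       (qn_equiv N (model_i R d1 d2 d3) \/
        qn_equiv N (qn_dual (model_i R d1 d2 d3)) \/
        qn_equiv N (model_ii R d1 d2 d3) \/
        qn_equiv N (qn_dual (model_ii R d1 d2 d3)) \/
        qn_equiv N (model_iii R d1 d2 d3 d4) \/
        qn_equiv N (qn_dual (model_iii R d1 d2 d3 d4)))) /\
  (forall d1 d2 d3 d4 : nat,
     (0 < d1)%N -> (0 < d2)%N -> (0 < d3)%N -> (0 < d4)%N ->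
     [/\ is_clifford_Nil (model_i R d1 d2 d3) /\
           indecomposable (model_i R d1 d2 d3) /\ NI_is (model_i R d1 d2 d3) 1,
         is_clifford_Nil (model_ii R d1 d2 d3) /\
           indecomposable (model_ii R d1 d2 d3) /\ NI_is (model_ii R d1 d2 d3) 1 &
         is_clifford_Nil (model_iii R d1 d2 d3 d4) /\
           indecomposable (model_iii R d1 d2 d3 d4) /\
           NI_is (model_iii R d1 d2 d3 d4) 1]).
Proof.
split; first exact: forward.
move=> d1 d2 d3 d4 h1 h2 h3 h4; split.
- exact: conv_i.
- exact: conv_ii.
- exact: conv_iii.
Qed.
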